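(* Consider the MPVC in $\mathbb R^2$: minimize $|x_1|+|x_2|$ subject to $g(x)=x_1+x_2\le0$, $H(x)=x_1\ge0$, $G(x)H(x)=x_1(x_1^2-x_2^2)\le0$ where $G(x)=x_1^2-x_2^2$ (so $m=1$, $l=0$, $q=1$). At $x^\ast=(0,0)$, MPVC-generalized quasinormality fails, but MPVC-ACQ holds. Moreover, the penalty function $P_\alpha$ is exact at $x^\ast$. Consequently, MPVC-ACQ does not imply MPVC-generalized quasinormality, and exactness of $P_\alpha$ at a local minimizer does not imply MPVC-generalized quasinormality there.
   Context: MPVC setup: for continuously differentiable $g_i,h_j,G_i,H_i:\mathbb R^n\to\mathbb R$ the constraints are $g_i(x)\le0$ $(i\le m)$, $h_j(x)=0$ $(j\le l)$, $H_i(x)\ge0$, $G_i(x)H_i(x)\le0$ $(i\le q)$, with feasible set $\mathcal C$. For $x^\ast\in\mathcal C$: $I_g=\{i:g_i(x^\ast)=0\}$, $I_+=\{i:H_i(x^\ast)>0\}$, $I_{+0}=\{i:H_i(x^\ast)>0,G_i(x^\ast)=0\}$, $I_{+-}=\{i:H_i(x^\ast)>0,G_i(x^\ast)<0\}$, $I_{0+}=\{i:H_i(x^\ast)=0,G_i(x^\ast)>0\}$, $I_{0-}=\{i:H_i(x^\ast)=0,G_i(x^\ast)<0\}$, $I_{00}=\{i:H_i(x^\ast)=0,G_i(x^\ast)=0\}$. Admissible multipliers: $(\lambda,\mu,\eta^G,\eta^H)\in\mathbb R^m\times\mathbb R^l\times\mathbb R^q\times\mathbb R^q$ with (i) $\sum_i\lambda_i\nabla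 g_i(x^\ast)+\sum_j\mu_j\nabla h_j(x^\ast)+\sum_i\eta^G_i\nabla G_i(x^\ast)-\sum_i\eta^H_i\nabla H_i(x^\ast)=0$; (ii) $\lambda_i\ge0$ for $i\in I_g$, $\lambda_i=0$ for $i\notin I_g$; $\eta^G_i=0$ for $i\in I_{+-}\cup I_{0-}\cup I_{0+}$, $\eta^G_i\ge0$ for $i\in I_{+0}\cup I_{00}$; $\eta^H_i=0$ for $i\in I_+$, $\eta^H_i\ge0$ for $i\in I_{0-}$, $\eta^H_i$ free for $i\in I_{0+}$; $\eta^H_i\eta^G_i=0$ for $i\in I_{00}$. MPVC-generalized quasinormality holds at $x^\ast$ if there is no nonzero admissible multiplier for which there is a sequence $x^k\to x^\ast$ such that for all $k$: $\lambda_i>0\Rightarrow\lambda_ig_i(x^k)>0$; $\mu_j\neq0\Rightarrow\mu_jh_j(x^k)>0$; $\eta^H_i\ne0\Rightarrow\eta^H_iH_i(x^k)<0$; $\eta^G_i>0\Rightarrow\eta^G_iG_i(x^k)>0$. $T_{\mathcal C}(x^\ast)$ denotes the Bouligand tangent cone of $\mathcal C$ at $x^\ast$. The MPVC-linearized cone is $L_{MPVC}(x^\ast)=\{d:\nabla g_i(x^\ast)^Td\le0\ (i\in I_g);\ \nabla h_j(x^\ast)^Td=0\ (\forall j);\ \nabla H_i(x^\ast)^Td=0\ (i\in I_{0+});\ \nabla H_i(x^\ast)^Td\ge0\ (i\in I_{00}\cup I_{0-});\ \nabla G_i(x^\ast)^Td\le0\ (i\in I_{+0});\ (\nabla G_i(x^\ast)^Td)(\nabla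 H_i(x^\ast)^Td)\le0\ (i\in I_{00})\}$; MPVC-ACQ holds at $x^\ast$ if $T_{\mathcal C}(x^\ast)=L_{MPVC}(x^\ast)$. Penalty function: $P_\alpha(x)=f(x)+\alpha\big[\sum_i\max\{0,g_i(x)\}+\sum_j|h_j(x)|+\sum_i\max\{0,-H_i(x),\min\{G_i(x),H_i(x)\}\}\big]$ for $\alpha\ge0$; $P_\alpha$ is exact at $x^\ast$ if there is $\bar\alpha\ge0$ such that $x^\ast$ is a local minimizer of $P_\alpha$ on $\mathbb R^n$ for all $\alpha\ge\bar\alpha$. *)

(* Defs.v *)
From Stdlib Require Import Reals Lra.
Open Scope R_scope.

(* Points of R^n are represented as functions nat -> R; only the
   coordinates 0..n-1 are meaningful. *)
Definition vec := nat -> R.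

Fixpoint sumR (n : nat) (f : nat -> R) : R :=
  match n with O => 0 | S k => sumR k f + f k end.

Definition dot (n : nat) (u v : vec) : R := sumR n (fun i => u i * v i).
Definition vnorm (n : nat) (v : vec) : R := sqrt (dot n v v).
Definition vsub (u v : vec) : vec := fun i => u i - v i.
Definition vadd (u v : vec) : vec := fun i => u i + v i.
Definition vscale (t : R) (v : vec) : vec := fun i => t * v i.

Record MPVC := mkMPVC {
  dim : nat; nm : nat; nl : nat; nq : nat;
  fobj : vec -> R;
  gf : nat -> vec -> R; hf : nat -> vec -> R;
  Gf : nat -> vec -> R; Hf : nat -> vec -> R;
  dg : nat -> vec -> vec; dh : nat -> vec -> vec;
  dG : nat -> vec -> vec; dH : nat -> vec -> vec }.

Definition feasible (P : MPVC) (x : vec) : Prop :=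
  (forall i, (i < nm P)%nat -> gf P i x <= 0) /\
  (forall j, (j < nl P)%nat -> hf P j x = 0) /\
  (forall i, (i < nq P)%nat -> Hf P i x >= 0 /\ Gf P i x * Hf P i x <= 0).

Definition local_min_on_C (P : MPVC) (xs : vec) : Prop :=
  feasible P xs /\
  exists eps, eps > 0 /\ forall x, feasible P x ->
    vnorm (dim P) (vsub x xs) < eps -> fobj P xs <= fobj P x.

Definition Ig P xs i := (i < nm P)%nat /\ gf P i xs = 0.
Definition Iplus P xs i := (i < nq P)%nat /\ Hf P i xs > 0.
Definition Ip0 P xs i := (i < nq P)%nat /\ Hf P i xs > 0 /\ Gf P i xs = 0.
Definition Ipm P xs i := (i < nq P)%nat /\ Hf P i xs > 0 /\ Gf P i xs < 0.
Definition I0p P xs i := (i < nq P)%nat /\ Hf P i xs = 0 /\ Gf P i xs > 0.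
Definition I0m P xs i := (i < nq P)%nat /\ Hf P i xs = 0 /\ Gf P i xs < 0.
Definition I00 P xs i := (i < nq P)%nat /\ Hf P i xs = 0 /\ Gf P i xs = 0.

Definition admissible (P : MPVC) (xs : vec)
    (lam mu etaG etaH : nat -> R) : Prop :=
  (forall k, (k < dim P)%nat ->
     sumR (nm P) (fun i => lam i * dg P i xs k)
   + sumR (nl P) (fun j => mu j * dh P j xs k)
   + sumR (nq P) (fun i => etaG i * dG P i xs k)
   - sumR (nq P) (fun i => etaH i * dH P i xs k) = 0) /\
  (forall i, (i < nm P)%nat -> Ig P xs i -> lam i >= 0) /\
  (forall i, (i < nm P)%nat -> ~ Ig P xs i -> lam i = 0) /\
  (forall i, (Ipm P xs i \/ I0m P xs i \/ I0p P xs i) -> etaG i = 0) /\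
  (forall i, (Ip0 P xs i \/ I00 P xs i) -> etaG i >= 0) /\
  (forall i, Iplus P xs i -> etaH i = 0) /\
  (forall i, I0m P xs i -> etaH i >= 0) /\
  (forall i, I00 P xs i -> etaH i * etaG i = 0).

Definition nonzero_mult (P : MPVC) (lam mu etaG etaH : nat -> R) : Prop :=
  (exists i, (i < nm P)%nat /\ lam i <> 0) \/
  (exists j, (j < nl P)%nat /\ mu j <> 0) \/
  (exists i, (i < nq P)%nat /\ etaG i <> 0) \/
  (exists i, (i < nq P)%nat /\ etaH i <> 0).

Definition MPVC_GQN (P : MPVC) (xs : vec) : Prop :=
  ~ exists lam mu etaG etaH,
      admissible P xs lam mu etaG etaH /\ nonzero_mult P lam mu etaG etaH /\
      exists xk : nat -> vec,
        Un_cv (fun k => vnorm (dim P) (vsub (xk k) xs)) 0 /\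
        forall k,
          (forall i, (i < nm P)%nat -> lam i > 0 -> lam i * gf P i (xk k) > 0) /\
          (forall j, (j < nl P)%nat -> mu j <> 0 -> mu j * hf P j (xk k) > 0) /\
          (forall i, (i < nq P)%nat -> etaH i <> 0 -> etaH i * Hf P i (xk k) < 0) /\
          (forall i, (i < nq P)%nat -> etaG i > 0 -> etaG i * Gf P i (xk k) > 0).

Definition tangent_cone (P : MPVC) (xs : vec) (d : vec) : Prop :=
  exists (t : nat -> R) (dk : nat -> vec),
    (forall k, t k > 0) /\ Un_cv t 0 /\
    Un_cv (fun k => vnorm (dim P) (vsub (dk k) d)) 0 /\
    forall k, feasible P (vadd xs (vscale (t k) (dk k))).

Definition L_MPVC (P : MPVC) (xs : vec) (d : vec) : Prop :=
  (forall i, Ig P xs i -> dot (dim P) (dg P i xs) d <= 0) /\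
  (forall j, (j < nl P)%nat -> dot (dim P) (dh P j xs) d = 0) /\
  (forall i, I0p P xs i -> dot (dim P) (dH P i xs) d = 0) /\
  (forall i, (I00 P xs i \/ I0m P xs i) -> dot (dim P) (dH P i xs) d >= 0) /\
  (forall i, Ip0 P xs i -> dot (dim P) (dG P i xs) d <= 0) /\
  (forall i, I00 P xs i ->
     dot (dim P) (dG P i xs) d * dot (dim P) (dH P i xs) d <= 0).

Definition MPVC_ACQ (P : MPVC) (xs : vec) : Prop :=
  forall d, tangent_cone P xs d <-> L_MPVC P xs d.

Definition penalty (P : MPVC) (alpha : R) (x : vec) : R :=
  fobj P x + alpha *
   (sumR (nm P) (fun i => Rmax 0 (gf P i x))
  + sumR (nl P) (fun j => Rabs (hf P j x))
  + sumR (nq P) (fun i => Rmax 0 (Rmax (- Hf P i x) (Rmin (Gf P i x) (Hf P i x))))).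

Definition penalty_exact (P : MPVC) (xs : vec) : Prop :=
  exists abar, abar >= 0 /\ forall alpha, alpha >= abar ->
    exists eps, eps > 0 /\ forall x,
      vnorm (dim P) (vsub x xs) < eps -> penalty P alpha xs <= penalty P alpha x.

(* The concrete example in R^2 (coordinates x 0, x 1). *)
Definition mkv2 (a b : R) : vec :=
  fun k => match k with O => a | S O => b | _ => 0 end.

Definition example : MPVC := {|
  dim := 2; nm := 1; nl := 0; nq := 1;
  fobj := fun x => Rabs (x 0%nat) + Rabs (x 1%nat);
  gf := fun _ x => x 0%nat + x 1%nat;
  hf := fun _ _ => 0;
  Gf := fun _ x => x 0%nat ^ 2 - x 1%nat ^ 2;
  Hf := fun _ x => x 0%nat;
  dg := fun _ _ => mkv2 1 1;
  dh := fun _ _ => mkv2 0 0;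
  dG := fun _ x => mkv2 (2 * x 0%nat) (-2 * x 1%nat);
  dH := fun _ _ => mkv2 1 0 |}.

Definition xstar : vec := mkv2 0 0.

(* Main.v *)
Require Import Defs.
From Stdlib Require Import Reals.
From Stdlib Require Import Lra Psatz.
Open Scope R_scope.

Lemma vnorm2 (v : vec) : vnorm 2 v = sqrt (v 0%nat * v 0%nat + v 1%nat * v 1%nat).
Proof. unfold vnorm, dot; simpl; f_equal; ring. Qed.

Lemma abs0_le (v : vec) : Rabs (v 0%nat) <= vnorm 2 v.
Proof.
  rewrite vnorm2, <- sqrt_Rsqr_abs. apply sqrt_le_1_alt. unfold Rsqr. nra.
Qed.

Lemma abs1_le (v : vec) : Rabs (v 1%nat) <= vnorm 2 v.
Proof.
  rewrite vnorm2, <- sqrt_Rsqr_abs. apply sqrt_le_1_alt. unfold Rsqr. nra.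
Qed.

Lemma cv_inv : Un_cv (fun k => / INR (S k)) 0.
Proof.
  intros eps He. destruct (archimed (/ eps)) as [H1 _].
  destruct (INR_unbounded (/ eps)) as [N HN].
  exists N. intros n Hn. unfold R_dist. rewrite Rminus_0_r.
  assert (Hpos : 0 < INR (S n)) by (apply lt_0_INR; lia).
  rewrite Rabs_pos_eq by (left; apply Rinv_0_lt_compat; lra).
  assert (INR N <= INR n) by (apply le_INR; lia).
  rewrite S_INR in *.
  apply (Rmult_lt_reg_l (INR n + 1)); [lra|].
  rewrite Rinv_r by lra.
  assert (/ eps * eps = 1) by (field; lra).
  assert (/ eps < INR n + 1) by lra. nra.
Qed.

Lemma cv_const0 : Un_cv (fun _ : nat => 0) 0.
Proof. intros eps He. exists O. intros. unfold R_dist. rewrite Rminus_0_r, Rabs_R0. lra. Qed.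

Theorem mainTheorem6 :
  local_min_on_C example xstar /\
  ~ MPVC_GQN example xstar /\
  MPVC_ACQ example xstar /\
  penalty_exact example xstar.
Proof.
  split; [|split; [|split]].
  -
    split.
    + unfold feasible; simpl. repeat split; intros; try lia; unfold xstar; simpl; lra.
    + exists 1. split; [lra|]. intros x _ _. simpl. unfold xstar; simpl.
      rewrite Rabs_R0. pose proof (Rabs_pos (x 0%nat)). pose proof (Rabs_pos (x 1%nat)). lra.
  -
    intros HG. apply HG.
    exists (fun _ => 0), (fun _ => 0), (fun _ => 1), (fun _ => 0).
    split; [|split].
    + unfold admissible, Ig, Ipm, I0m, I0p, Ip0, I00, Iplus; simpl; unfold xstar; simpl.
      repeat split; intros; try lra.
      all: try (destruct k as [|[|k]]; simpl; lra).
      all: try (destruct H as [H|[H|H]]; lra).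
      all: try (destruct H as [H|H]; lra).
    + right; right; left. exists O. simpl. split; [lia|lra].
    + exists (fun k => mkv2 (/ INR (S k)) 0). split.
      * eapply Un_cv_ext; [|apply cv_inv]. intros n.
        rewrite vnorm2. unfold vsub, xstar, mkv2. cbv beta iota.
        replace ((/ INR (S n) - 0) * (/ INR (S n) - 0) + (0 - 0) * (0 - 0))
          with (Rsqr (/ INR (S n))) by (unfold Rsqr; ring).
        rewrite sqrt_Rsqr; [reflexivity|].
        left; apply Rinv_0_lt_compat, lt_0_INR; lia.
      * intros k. assert (Hk : 0 < / INR (S k)) by (apply Rinv_0_lt_compat, lt_0_INR; lia).
        set (t := / INR (S k)) in *. simpl. repeat split; intros; try lra; try lia.
        all: nra.
  -
    intros d. split.
    + intros [t [dk [Ht [Htc [Hdk Hf]]]]].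
      assert (F : forall k, dk k 0%nat >= 0 /\ dk k 0%nat + dk k 1%nat <= 0).
      { intros k. destruct (Hf k) as [Hg [_ Hq]].
        specialize (Hg O ltac:(simpl; lia)). specialize (Hq O ltac:(simpl; lia)).
        simpl in Hg, Hq. unfold vadd, vscale, xstar in Hg, Hq; simpl in Hg, Hq.
        specialize (Ht k). destruct Hq as [Hq _]. split; nra. }
      assert (D0 : d 0%nat >= 0).
      { destruct (Rge_dec (d 0%nat) 0) as [|Hn]; [assumption|].
        destruct (Hdk (- d 0%nat)) as [N HN]; [lra|].
        specialize (HN N (le_n N)). change (dim example) with 2%nat in HN. unfold R_dist in HN. rewrite Rminus_0_r in HN.
        rewrite Rabs_pos_eq in HN by (unfold vnorm; apply sqrt_pos).
        pose proof (abs0_le (vsub (dk N) d)) as A. unfold vsub in A, HN.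
        destruct (F N). pose proof (Rle_abs (dk N 0%nat - d 0%nat)) as B.
        lra. }
      assert (D1 : d 0%nat + d 1%nat <= 0).
      { destruct (Rle_dec (d 0%nat + d 1%nat) 0) as [|Hn]; [assumption|].
        destruct (Hdk ((d 0%nat + d 1%nat)/2)) as [N HN]; [lra|].
        specialize (HN N (le_n N)). change (dim example) with 2%nat in HN. unfold R_dist in HN. rewrite Rminus_0_r in HN.
        pose proof (abs0_le (vsub (dk N) d)). pose proof (abs1_le (vsub (dk N) d)).
        pose proof (Rle_abs (vsub (dk N) d 0%nat)).
        pose proof (Rle_abs (vsub (dk N) d 1%nat)).
        rewrite Rabs_pos_eq in HN by (unfold vnorm; apply sqrt_pos).
        unfold vsub in *. destruct (F N).
        pose proof (Rle_abs (d 0%nat - dk N 0%nat)) as B0.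
        pose proof (Rle_abs (d 1%nat - dk N 1%nat)) as B1.
        rewrite Rabs_minus_sym in B0, B1. lra. }
      unfold L_MPVC, Ig, I0p, I00, I0m, Ip0; simpl; unfold xstar, dot; simpl.
      repeat split; intros; try lra; try lia.
      all: try (destruct H as [H|H]; lra).
    + unfold L_MPVC, Ig, I0p, I00, I0m, Ip0; simpl; unfold xstar, dot; simpl.
      intros [Hg [_ [_ [HH _]]]].
      assert (Hg0 : d 0%nat + d 1%nat <= 0) by (assert (Hx := Hg O); lapply Hx; [intro; lra| split; [lia|lra]]).
      assert (HH0 : d 0%nat >= 0) by (assert (Hx := HH O); lapply Hx; [intro; lra| left; split; [lia|split; lra]]).
      clear Hg HH.
      exists (fun k => / INR (S k)), (fun _ => d). split; [|split; [|split]].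
      * intros k. apply Rlt_gt, Rinv_0_lt_compat, lt_0_INR; lia.
      * apply cv_inv.
      * eapply Un_cv_ext; [|apply cv_const0]. intros n. rewrite vnorm2.
        unfold vsub. replace (d 0%nat - d 0%nat) with 0 by ring.
        replace (d 1%nat - d 1%nat) with 0 by ring.
        replace (0*0+0*0) with 0 by ring. symmetry; apply sqrt_0.
      * intros k. assert (Ht : 0 < / INR (S k)) by (apply Rinv_0_lt_compat, lt_0_INR; lia).
        set (t := / INR (S k)) in *.
        unfold feasible; simpl; unfold vadd, vscale, xstar; simpl.
        assert (d 1%nat <= - d 0%nat) by lra.
        assert (d 0%nat * d 0%nat <= d 1%nat * d 1%nat) by nra.
        assert (0 <= t * d 0%nat) by nra.
        assert (t * d 0%nat * (t * d 0%nat) <= t * d 1%nat * (t * d 1%nat)) by nra.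
        repeat split; intros; try lia.
        all: match goal with |- ?g => idtac g end.
        all: nra.
  -
    exists 0. split; [lra|]. intros alpha Ha. exists 1. split; [lra|]. intros x _.
    unfold penalty; simpl; unfold xstar; simpl.
    rewrite Rabs_R0.
    repeat rewrite Rmax_left by lra || idtac.
    pose proof (Rabs_pos (x 0%nat)). pose proof (Rabs_pos (x 1%nat)).
    pose proof (Rmax_l 0 (x 0%nat + x 1%nat)).
    pose proof (Rmax_l 0 (Rmax (- x 0%nat) (Rmin (x 0%nat ^ 2 - x 1%nat ^ 2) (x 0%nat)))).
    unfold Rmin; destruct (Rle_dec _ _); unfold Rmax; repeat destruct (Rle_dec _ _); nra.
Qed.
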